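(* Let $T:\mathbb{Z}\to\mathbb{Z}$ be defined by $T(n)=n/2$ if $n$ is even and $T(n)=(3n+1)/2$ if $n$ is odd, and let $[2]_3$ be the set of integers congruent to $2\pmod 3$. Define $T^*:[2]_3\to\mathbb{Z}$ by $$T^*(n)=\begin{cases} T(n)=\frac{3n+1}{2}, & n\equiv -1\pmod 6,\\ T^2(n)=\frac{3n+2}{4}, & n\equiv 2\pmod{12},\\ T^3(n)=\frac{3n+4}{8}, & n\equiv -4\pmod{24},\\ T^4(n)=\frac{3n+8}{16}, & n\equiv 8\pmod{48},\\ T^5(n)=\frac{3n+16}{32}, & n\equiv -16\pmod{96},\\ T^6(n)=\frac{3n+32}{64}, & n\equiv 32\pmod{192},\\ T^6(n)=\frac{n}{64}, & n\equiv -64\pmod{192}.\end{cases}$$ Then (i) the range of $T^*$ is exactly $[2]_3$; and (ii) for every $n\in[2]_3$, the $T^*$-trajectory $((T^* )^k(n))_{k\ge 0}$ consists of finitely many numbers congruent to $5\pmod 9$ followed only by numbers congruent to $2$ or $8\pmod 9$.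
   Context: The seven residue classes in the definition partition $[2]_3$. $T^k$ and $(T^* )^k$ denote $k$-fold iterates, with the $0$-th iterate the identity. *)

(* Defs.v *)
From Stdlib Require Import ZArith.
Open Scope Z_scope.

Definition T (n : Z) : Z :=
  if Z.even n then n / 2 else (3 * n + 1) / 2.

Definition iterZ (k : nat) (f : Z -> Z) (n : Z) : Z := Nat.iter k f n.

Definition in23 (n : Z) : Prop := n mod 3 = 2.

(* T* on [2]_3, defined case-wise by iterates of T as in the paper.
   The seven residue classes partition [2]_3; outside [2]_3 the value
   (identity) is an irrelevant default. *)
Definition Tstar (n : Z) : Z :=
  if Z.eqb (n mod 6) 5 then iterZ 1 T n
  else if Z.eqb (n mod 12) 2 then iterZ 2 T n
  else if Z.eqb (n mod 24) 20 then iterZ 3 T n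
  else if Z.eqb (n mod 48) 8 then iterZ 4 T n
  else if Z.eqb (n mod 96) 80 then iterZ 5 T n
  else if Z.eqb (n mod 192) 32 then iterZ 6 T n
  else if Z.eqb (n mod 192) 128 then iterZ 6 T n
  else n.

(* Main.v *)
Require Import Defs.
From Stdlib Require Import ZArith Lia.
Open Scope Z_scope.

Lemma Tev : forall x y, x = 2 * y -> T x = y.
Proof.
  intros x y ->. unfold T. rewrite Z.even_mul. change (Z.even 2) with true.
  cbn [orb]; rewrite (Z.mul_comm 2 y), Z.div_mul; lia.
Qed.

Lemma Tod : forall x b y, x = 2 * b + 1 -> y = 3 * b + 2 -> T x = y.
Proof.
  intros x b y -> ->. unfold T.
  replace (Z.even (2 * b + 1)) with false
    by (rewrite Z.even_add, Z.even_mul; reflexivity).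
  replace (3 * (2 * b + 1) + 1) with ((3 * b + 2) * 2) by ring.
  rewrite Z.div_mul; lia.
Qed.

Ltac noT x := lazymatch x with context [T _] => fail | _ => idtac end.

Ltac stepT :=
  match goal with
  | |- context [T (?c * ?v + ?d)] =>
    let c2 := eval compute in (c / 2) in
    let d2 := eval compute in (d / 2) in
    let dm := eval compute in (d mod 2) in
    lazymatch dm with
    | 0 => rewrite (Tev (c * v + d) (c2 * v + d2)) by lia
    | 1 => let c3 := eval compute in (3 * c2) in
           let d3 := eval compute in (3 * d2 + 2) in
           rewrite (Tod (c * v + d) (c2 * v + d2) (c3 * v + d3)) by lia
    end
  end.

Ltac getA M r :=
  match goal with
  | e : ?n mod M = r |- _ =>
    let E := fresh "E" in
    assert (E : n = M * (n / M) + r) by (pose proof (Z.div_mod n M); lia);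
    let a := fresh "a" in
    set (a := n / M) in E; clearbody a; subst n
  end.

Ltac caseT M r := getA M r; cbv [iterZ Nat.iter nat_rect]; repeat stepT; repeat match goal with H : _ mod _ = _ |- _ => clear H | H : _ <> _ |- _ => clear H end.

Lemma L (n : Z) : in23 n -> in23 (Tstar n) /\
  ((Tstar n) mod 9 = 2 \/ (Tstar n) mod 9 = 8 \/
   ((Tstar n) mod 9 = n mod 9 /\ Z.abs (Tstar n) < Z.abs n)).
Proof.
  intro Hn. unfold Tstar, in23 in *.
  destruct (Z.eqb_spec (n mod 6) 5).
  { caseT 6 5. split; [|right; left]; Z.div_mod_to_equations; lia. }
  destruct (Z.eqb_spec (n mod 12) 2).
  { caseT 12 2. split; [|left]; Z.div_mod_to_equations; lia. }
  destruct (Z.eqb_spec (n mod 24) 20).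
  { caseT 24 20. split; [|right; left]; Z.div_mod_to_equations; lia. }
  destruct (Z.eqb_spec (n mod 48) 8).
  { caseT 48 8. split; [|left]; Z.div_mod_to_equations; lia. }
  destruct (Z.eqb_spec (n mod 96) 80).
  { caseT 96 80. split; [|right; left]; Z.div_mod_to_equations; lia. }
  destruct (Z.eqb_spec (n mod 192) 32).
  { caseT 192 32. split; [|left]; Z.div_mod_to_equations; lia. }
  destruct (Z.eqb_spec (n mod 192) 128).
  { caseT 192 128. split; [|right; right; split]; Z.div_mod_to_equations; lia. }
  exfalso. Z.div_mod_to_equations. lia.
Qed.

Lemma Tstar64 (b : Z) : Tstar (192 * b + 128) = 3 * b + 2.
Proof.
  unfold Tstar.
  destruct (Z.eqb_spec ((192 * b + 128) mod 6) 5);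
    [exfalso; Z.div_mod_to_equations; lia|].
  destruct (Z.eqb_spec ((192 * b + 128) mod 12) 2);
    [exfalso; Z.div_mod_to_equations; lia|].
  destruct (Z.eqb_spec ((192 * b + 128) mod 24) 20);
    [exfalso; Z.div_mod_to_equations; lia|].
  destruct (Z.eqb_spec ((192 * b + 128) mod 48) 8);
    [exfalso; Z.div_mod_to_equations; lia|].
  destruct (Z.eqb_spec ((192 * b + 128) mod 96) 80);
    [exfalso; Z.div_mod_to_equations; lia|].
  destruct (Z.eqb_spec ((192 * b + 128) mod 192) 32);
    [exfalso; Z.div_mod_to_equations; lia|].
  destruct (Z.eqb_spec ((192 * b + 128) mod 192) 128);
    [|exfalso; Z.div_mod_to_equations; lia].
  cbv [iterZ Nat.iter nat_rect]; repeat stepT; reflexivity.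
Qed.

Lemma iter_S (k : nat) (n : Z) : iterZ (S k) Tstar n = Tstar (iterZ k Tstar n).
Proof. reflexivity. Qed.

Lemma iter_S_r (k : nat) (n : Z) : iterZ (S k) Tstar n = iterZ k Tstar (Tstar n).
Proof. unfold iterZ. apply Nat.iter_succ_r. Qed.

Lemma mod9_cases (n : Z) : in23 n -> n mod 9 = 2 \/ n mod 9 = 5 \/ n mod 9 = 8.
Proof. unfold in23; intros; Z.div_mod_to_equations; lia. Qed.

Lemma inv (n : Z) : in23 n -> (n mod 9 = 2 \/ n mod 9 = 8) ->
  forall k, in23 (iterZ k Tstar n) /\
    (iterZ k Tstar n mod 9 = 2 \/ iterZ k Tstar n mod 9 = 8).
Proof.
  intros Hn H9 k. induction k as [|k IH].
  - simpl. auto.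
  - rewrite iter_S. destruct IH as [H1 H2].
    destruct (L _ H1) as [H3 H4]. split; [exact H3|]. lia.
Qed.

Lemma part2 (N : nat) : forall n : Z, (Z.abs_nat n <= N)%nat -> in23 n ->
     exists K : nat,
       (forall k : nat, (k < K)%nat -> (iterZ k Tstar n) mod 9 = 5) /\
       (forall k : nat, (K <= k)%nat ->
          (iterZ k Tstar n) mod 9 = 2 \/ (iterZ k Tstar n) mod 9 = 8).
Proof.
  induction N as [|N IH]; intros n Hle Hn.
  - exfalso. unfold in23 in Hn. assert (n = 0) by lia. subst. discriminate.
  - destruct (mod9_cases n Hn) as [H|[H|H]].
    1,3: exists 0%nat; split; [intros; lia|intros k _; apply (inv n Hn); auto].
    destruct (L n Hn) as [H1 [H2|[H2|[H2 H3]]]].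
    1,2: exists 1%nat; split;
      [intros k Hk; replace k with 0%nat by lia; exact H
      |intros [|k] Hk; [lia|]; rewrite iter_S_r; apply (inv _ H1); auto].
    destruct (IH (Tstar n)) as [K [HK1 HK2]]; [lia|exact H1|].
    exists (S K). split.
    + intros [|k] Hk; [exact H|]. rewrite iter_S_r. apply HK1. lia.
    + intros [|k] Hk; [lia|]. rewrite iter_S_r. apply HK2. lia.
Qed.

Theorem theorem5 :
  (forall m : Z, in23 m <-> exists n : Z, in23 n /\ Tstar n = m) /\
  (forall n : Z, in23 n ->
     exists K : nat,
       (forall k : nat, (k < K)%nat -> (iterZ k Tstar n) mod 9 = 5) /\
       (forall k : nat, (K <= k)%nat ->
          (iterZ k Tstar n) mod 9 = 2 \/ (iterZ k Tstar n) mod 9 = 8)).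
Proof.
  split.
  - intro m. split.
    + intro Hm. exists (192 * (m / 3) + 128). split.
      * unfold in23. Z.div_mod_to_equations. lia.
      * rewrite Tstar64. unfold in23 in Hm. pose proof (Z.div_mod m 3). lia.
    + intros [n [Hn <-]]. apply (L n Hn).
  - intros n Hn. apply (part2 (Z.abs_nat n)); auto.
Qed.
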